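(* Let $q$ be a power of the prime $p$. For every integer $c\ge2$ and every integer $k\ge0$, $$R^c_k\le p\cdot\max_{0\le j\le k}\binom{k+c-2-j}{c-2}\binom{q/p-1}{\lfloor j/p\rfloor}.$$
   Context: Binomial coefficients $\binom{x}{m}=x(x-1)\cdots(x-m+1)/m!$ for real $x$, integer $m\ge0$. $R^1_k=-(-1)^{\lfloor k/p\rfloor}\binom{q/p-1}{\lfloor k/p\rfloor}$ for integers $k\ge0$, and recursively $R^c_k=\sum_{j=0}^kR^{c-1}_j$ for $c\ge2$. *)

(* Defs.v *)
From HB Require Import structures.
From mathcomp Require Import all_boot all_order all_algebra.
Set Implicit Arguments. Unset Strict Implicit. Unset Printing Implicit Defensive.
Import Order.TTheory GRing.Theory Num.Theory.
Local Open Scope ring_scope.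

Definition binomr (x : rat) (m : nat) : rat :=
  (\prod_(i < m) (x - i%:R)) / (m`!)%:R.

Definition R1 (p q : nat) (k : nat) : rat :=
  - ((-1) ^+ (k %/ p)%N * binomr (q%:R / p%:R - 1) (k %/ p)%N).

(* Rc p q c k = R^c_k for c >= 1 (value at c = 0 is a junk copy of R^1). *)
Fixpoint Rc (p q : nat) (c : nat) (k : nat) : rat :=
  match c with
  | 0 => R1 p q k
  | 1 => R1 p q k
  | (S (S _ as c')) => \sum_(j < k.+1) Rc p q c' j
  end.

(* Main.v *)
Require Import Defs.
From HB Require Import structures.
From mathcomp Require Import all_boot all_order all_algebra.
Import Order.TTheory GRing.Theory Num.Theory.
From Stdlib Require Import Lia.

Definition LC (f : nat -> nat) := forall m, f m * f m.+2 <= f m.+1 * f m.+1.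
Definition ZP (f : nat -> nat) := forall m, f m = 0 -> f m.+1 = 0.
Definition DD (f : nat -> nat) := forall m, f m.+1 <= f m -> f m.+2 <= f m.+1.

Lemma LC_mul f g : LC f -> LC g -> LC (fun m => f m * g m).
Proof.
move=> hf hg m.
rewrite mulnACA [X in _ <= X]mulnACA; exact: leq_mul.
Qed.

Lemma ZP_mul f g : ZP f -> ZP g -> ZP (fun m => f m * g m).
Proof.
move=> hf hg m /eqP; rewrite muln_eq0 => /orP[/eqP/hf->|/eqP/hg->]; by rewrite ?muln0.
Qed.

Lemma LCZP_DD f : LC f -> ZP f -> DD f.
Proof.
move=> hl hz m h.
case: (posnP (f m.+1)) => [h0|hp]; first by rewrite (hz _ h0) h0.
rewrite -(leq_pmul2l hp); apply: leq_trans (hl m).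
by rewrite leq_mul2r h orbT.
Qed.

Lemma LC_bin a : LC (fun m => 'C(a, m)).
Proof.
move=> m.
have e1 := mul_bin_left a m.
have e2 := mul_bin_left a m.+1.
rewrite -(@leq_pmul2l (m.+1 * m.+2)) //.
have -> : m.+1 * m.+2 * ('C(a, m) * 'C(a, m.+2)) = (m.+1 * 'C(a,m)) * (m.+2 * 'C(a, m.+2)).
  by rewrite mulnACA.
have -> : m.+1 * m.+2 * ('C(a, m.+1) * 'C(a, m.+1)) = (m.+2 * 'C(a,m.+1)) * (m.+1 * 'C(a, m.+1)).
  by rewrite mulnACA mulnC.
rewrite e2 e1.
rewrite mulnACA [X in _ <= X]mulnACA [X in _ <= _ * X]mulnC.
apply: leq_mul => //; apply: leq_mul => //; exact: leq_sub2l.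
Qed.

Lemma ZP_bin a : ZP (fun m => 'C(a, m)).
Proof.
move=> m /eqP; rewrite -leqn0 leqNgt bin_gt0 -ltnNge => h.
by apply/eqP; rewrite -leqn0 leqNgt bin_gt0 -ltnNge ltnW.
Qed.

Lemma LC_lin X p : LC (fun m => X - p * m).
Proof.
move=> m /=.
rewrite !mulnS.
move: (p * m) => A; apply/ssrnat.leP; rewrite -!multE -!minusE -!plusE; nia.
Qed.

Lemma ZP_lin X p : ZP (fun m => X - p * m).
Proof.
move=> m /= /eqP; rewrite subn_eq0 => h; apply/eqP; rewrite subn_eq0.
by apply: leq_trans h _; rewrite leq_mul2l leqnSn orbT.
Qed.

Lemma LC_ext f g : LC f -> (forall m, f m = g m) -> LC g.
Proof. by move=> h e m; rewrite -!e. Qed.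

Lemma LC_const c : LC (fun _ => c).
Proof. by move=> m. Qed.

Lemma LC_ff p r : forall X, LC (fun m => (X - p * m) ^_ r).
Proof.
elim: r => [|r IH] X.
  by move=> m; rewrite !ffactn0.
refine (LC_ext _ _ (LC_mul _ _ (LC_lin X p) (IH X.-1)) _) => m.
by rewrite ffactnS -!subn1 subnAC.
Qed.

Lemma LC_binX X p r : LC (fun m => 'C(X - p * m, r)).
Proof.
move=> m /=.
rewrite -(@leq_pmul2r (r`! * r`!)) ?muln_gt0 ?fact_gt0 //.
rewrite mulnACA [X in _ <= X]mulnACA !bin_ffact.
exact: LC_ff.
Qed.

Lemma ZP_binX X p r : ZP (fun m => 'C(X - p * m, r)).
Proof.
move=> m /eqP; rewrite -leqn0 leqNgt bin_gt0 -ltnNge => h.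
apply/eqP; rewrite -leqn0 leqNgt bin_gt0 -ltnNge.
apply: leq_ltn_trans h; apply: leq_sub2l; by rewrite leq_mul2l leqnSn orbT.
Qed.

Lemma LC_ind p i K : LC (fun m => nat_of_bool (p * m + i < K)).
Proof.
move=> m /=.
case h2: (p * m.+2 + i < K); last by rewrite muln0.
have h1 : p * m.+1 + i < K.
  apply: leq_ltn_trans h2; by rewrite leq_add2r leq_mul2l leqnSn orbT.
by rewrite h1; case: (_ < _).
Qed.

Lemma ZP_ind p i K : ZP (fun m => nat_of_bool (p * m + i < K)).
Proof.
move=> m /=; case h: (p * m + i < K) => // _.
case h2: (p * m.+1 + i < K) => //.
suff : p * m + i < K by rewrite h.
apply: leq_ltn_trans h2; by rewrite leq_add2r leq_mul2l leqnSn orbT.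
Qed.

Local Open Scope ring_scope.

Lemma sumS (F : nat -> rat) n : \sum_(m < n.+1) F m = F 0%N + \sum_(m < n) F m.+1.
Proof. by rewrite big_ord_recl. Qed.

Lemma alt_shift2 (v : nat -> nat) n :
  \sum_(m < n.+2) (-1) ^+ m * (v m)%:R =
  (v 0%N)%:R - (v 1%N)%:R + \sum_(m < n) (-1) ^+ m * (v m.+2)%:R :> rat.
Proof.
rewrite big_ord_recl big_ord_recl addrA; congr (_ + _ + _).
- by rewrite expr0 mul1r.
- by rewrite expr1 mulN1r.
- by apply: eq_bigr => i _; rewrite !exprS !mulN1r opprK.
Qed.

Lemma alt_shift1 (v : nat -> nat) n :
  \sum_(m < n.+1) (-1) ^+ m * (v m)%:R =
  (v 0%N)%:R - \sum_(m < n) (-1) ^+ m * (v m.+1)%:R :> rat.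
Proof.
rewrite big_ord_recl expr0 mul1r; congr (_ + _).
rewrite -sumrN; apply: eq_bigr => i _; by rewrite exprS mulN1r mulNr.
Qed.

Lemma NI_pos : forall L (v : nat -> nat), (forall m, (v m.+1 <= v m)%N) ->
  0 <= \sum_(m < L) (-1) ^+ m * (v m)%:R :> rat.
Proof.
suff H : forall L, (forall (v : nat -> nat), (forall m, (v m.+1 <= v m)%N) ->
  0 <= \sum_(m < L) (-1) ^+ m * (v m)%:R :> rat) /\
  (forall (v : nat -> nat), (forall m, (v m.+1 <= v m)%N) ->
  0 <= \sum_(m < L.+1) (-1) ^+ m * (v m)%:R :> rat).
  by move=> L; case: (H L).
elim=> [|L [IH1 IH2]].
  split=> v hv; first by rewrite big_ord0.
  by rewrite big_ord1 expr0 mul1r ler0n.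
split=> // v hv; rewrite alt_shift2; apply: addr_ge0.
  by rewrite subr_ge0 ler_nat.
exact: IH1 (fun m => hv m.+2).
Qed.

Lemma DD_ni (v : nat -> nat) : DD v -> (v 1 <= v 0)%N -> forall m, (v m.+1 <= v m)%N.
Proof. move=> hd h; elim=> // m IH; exact: hd. Qed.

Lemma alt_bound : forall L (v : nat -> nat) (B : rat), DD v ->
  (forall m, (m < L)%N -> (v m)%:R <= B) -> (0 < L)%N ->
  (v 0%N)%:R - B <= \sum_(m < L) (-1) ^+ m * (v m)%:R.
Proof.
elim/ltn_ind => L IH v B hd hB hL.
have hB0 : (v 0%N)%:R <= B by apply: hB.
case: L IH hB hL => // [[|[|L]]] IH hB _.
- by rewrite big_ord1 expr0 mul1r lerBlDr lerDl (le_trans _ hB0).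
- rewrite alt_shift2 big_ord0 addr0 lerD2l lerN2; exact: hB.
- case: (ssrnat.leqP (v 1%N) (v 0%N)) => h10.
    apply: le_trans (NI_pos _ _ (DD_ni _ hd h10)).
    by rewrite subr_le0.
  case: (ssrnat.leqP (v 2%N) (v 1%N)) => h21.
    have hni : forall m, (v m.+2 <= v m.+1)%N.
      apply: (DD_ni (fun m => v m.+1)) => // m; exact: hd.
    rewrite alt_shift1 (alt_shift1 (fun m => v m.+1)) lerD2l lerN2.
    apply: le_trans (hB 1%N isT); rewrite lerBlDr lerDl.
    exact: NI_pos (fun m => hni m.+1).
  rewrite alt_shift2.
  have := IH L.+1 _ (fun m => v m.+2) B (fun m => hd m.+2) (fun m hm => hB m.+2 hm) isT.
  move=> /(_ _) H.
  have {}H := H (leqW (leqnn _)).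
  apply: le_trans (lerD (lexx _) H).
  by rewrite addrA lerD2r -addrA lerDl addrC subr_ge0 ler_nat ltnW.
Qed.

Lemma binomr_nat (n m : nat) : binomr n%:R m = ('C(n, m))%:R.
Proof.
rewrite /binomr.
have -> : \prod_(i < m) (n%:R - i%:R) = (n ^_ m)%:R :> rat.
  elim: m => [|m IH]; first by rewrite big_ord0 ffactn0.
  rewrite big_ord_recr /= IH ffactnSr natrM.
  case: (ssrnat.leqP m n) => h; first by rewrite natrB.
  by rewrite ffact_small // !mul0r.
by rewrite -bin_ffact natrM mulfK // pnatr_eq0 -lt0n fact_gt0.
Qed.

Lemma Rc_closed p q d k :
  Rc p q d.+2 k = \sum_(j < k.+1) ('C(k + d - j, d))%:R * R1 p q j.
Proof.
elim: d k => [|d IH] k.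
  by rewrite /=; apply: eq_bigr => j _; rewrite bin0 mul1r.
have -> : Rc p q d.+3 k = \sum_(i < k.+1) Rc p q d.+2 i by [].
under eq_bigr do rewrite IH.
elim: k => [|k IHk].
  by rewrite !big_ord1 /= !add0n !subn0 !binn.
rewrite big_ord_recr /= IHk.
rewrite [in RHS]big_ord_recr [X in _ + X = _]big_ord_recr /=.
rewrite addrA; congr (_ + _); last first.
  by rewrite !addKn !binn.
rewrite -big_split /=; apply: eq_bigr => j _.
have hj : (j <= k.+1 + d)%N by rewrite (leq_trans (ltnW (ltn_ord j))) // leq_addr.
rewrite -mulrDl -natrD; congr (_%:R * _).
by rewrite [(k.+1 + d.+1)%N]addnS subSn // binS addnS addSn.
Qed.

Lemma reindex (F : nat -> rat) p K N : (0 < p)%N -> (N <= K)%N ->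
  \sum_(j < N) F j =
  \sum_(i < p) \sum_(m < K) (if (p * m + i < N)%N then F (p * m + i)%N else 0).
Proof.
move=> hp; elim: N => [|N IH] hN.
  by rewrite big_ord0 big1 // => i _; rewrite big1.
rewrite big_ord_recr IH; last exact: ltnW.
have -> : \sum_(i < p) \sum_(m < K) (if (p * m + i < N.+1)%N then F (p * m + i)%N else 0) =
  \sum_(i < p) \sum_(m < K) ((if (p * m + i < N)%N then F (p * m + i)%N else 0) +
     (if (nat_of_ord i == N %% p)%N && (nat_of_ord m == N %/ p)%N then F N else 0)).
  apply: eq_bigr => i _; apply: eq_bigr => m _.
  have hi := ltn_ord i.
  rewrite ltnS leq_eqVlt.
  have -> : (p * m + i == N)%N = (nat_of_ord i == N %% p)%N && (nat_of_ord m == N %/ p)%N.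
    apply/idP/idP.
      move/eqP=> <-; rewrite mulnC modnMDl divnMDl // modn_small // divn_small // addn0.
      by rewrite !eqxx.
    by case/andP=> /eqP -> /eqP ->; rewrite mulnC -divn_eq.
  case: (boolP ((nat_of_ord i == N %% p)%N && (nat_of_ord m == N %/ p)%N)) => h1.
    move: (h1) => /andP[/eqP hi' /eqP hm].
    have hlt : (p * m + i < N)%N = false.
      by rewrite hi' hm mulnC -divn_eq ltnn.
    by rewrite hlt /= add0r hi' hm mulnC -divn_eq.
  by rewrite /= addr0.
under [in RHS]eq_bigr do rewrite big_split.
rewrite [in RHS]big_split; congr (_ + _).
rewrite (bigD1 (Ordinal (ltn_pmod N hp))) //.
rewrite [X in _ = _ + X]big1; last first.
  move=> i hi; apply: big1 => m _.
  have -> : (nat_of_ord i == N %% p)%N = false.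
    apply: contraNF hi => /eqP h; apply/eqP; exact: val_inj.
  by [].
rewrite addr0 eqxx /=.
rewrite -big_mkcond (big_ord1_eq _ (fun=> F N)) /=.
by rewrite (leq_ltn_trans (leq_div _ _) hN).
Qed.

Theorem lemma4p4 (p q e c k : nat) (hp : prime p) (he : (0 < e)%N) (hq : q = (p ^ e)%N)
  (hc : (2 <= c)%N) :
  let T := fun j : nat =>
    ('C(k + c - 2 - j, c - 2))%:R * binomr (q%:R / p%:R - 1) (j %/ p)%N in
  Rc p q c k <= p%:R * \big[Num.max/T 0%N]_(j < k.+1) T (nat_of_ord j).
Proof.
pose T := fun j : nat =>
    ('C(k + c - 2 - j, c - 2))%:R * binomr (q%:R / p%:R - 1) (j %/ p)%N.
change (Rc p q c k <= p%:R * \big[Num.max/T 0%N]_(j < k.+1) T (nat_of_ord j)).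
have hp0 : (0 < p)%N := prime_gt0 hp.
set a := (p ^ e.-1).-1.
have ha : q%:R / p%:R - 1 = a%:R :> rat.
  rewrite hq -(prednK he) expnS natrM [p%:R * _]mulrC mulfK; last by rewrite pnatr_eq0 -lt0n.
  have hpe : (0 < p ^ e.-1)%N by rewrite expn_gt0 hp0.
  by rewrite -[(p ^ e.-1)%N](prednK hpe) -/a -addn1 natrD addrK.
have [d hd] : exists d, c = d.+2 by exists (c - 2)%N; rewrite -addn2 subnK.
subst c.
pose w j := ('C(k + d - j, d) * 'C(a, j %/ p))%N.
have hT : forall j, T j = (w j)%:R.
  move=> j; rewrite /T /w ha binomr_nat natrM; congr ('C(_, _)%:R * _).
    by rewrite addnS addnS subn2.
  by rewrite subn2.
set M := \big[Num.max/T 0%N]_(j < k.+1) T (nat_of_ord j).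
have hM : forall j, (j < k.+1)%N -> T j <= M.
  move=> j hj; exact: (le_bigmax (T 0%N) (fun j : 'I_k.+1 => T j) (Ordinal hj)).
have hM0 : 0 <= M by apply: le_trans (hM 0%N isT); rewrite hT ler0n.
rewrite Rc_closed.
have -> : \sum_(j < k.+1) 'C(k + d - j, d)%:R * R1 p q j =
   - \sum_(j < k.+1) (fun j => (-1) ^+ (j %/ p) * (w j)%:R) j.
  rewrite -sumrN; apply: eq_bigr => j _.
  rewrite /R1 hq -hq ha binomr_nat /w natrM mulrN mulrCA.
  by rewrite mulrA.
rewrite (reindex (fun j => (-1) ^+ (j %/ p) * (w j)%:R) p k.+1 k.+1 hp0 (leqnn _)) -sumrN.
pose v i m := (nat_of_bool (p * m + i < k.+1)%N * ('C(k + d - i - p * m, d) * 'C(a, m)))%N.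
have -> : p%:R * M = \sum_(i < p) M.
  by rewrite sumr_const card_ord mulr_natl.
apply: ler_sum => i _.
have hi := ltn_ord i.
rewrite (eq_bigr (fun m : 'I_k.+1 => (-1) ^+ m * (v i m)%:R)); last first.
  move=> m _.
  rewrite /v; case: ifP => h; last by rewrite mul0n mulr0.
  rewrite mul1n /w mulnC divnMDl // divn_small // addn0.
  by rewrite [(m * p + i)%N]addnC subnDA.
have hDD : DD (v i).
  apply: LCZP_DD.
    exact: (LC_mul _ _ (LC_ind p i k.+1) (LC_mul _ _ (LC_binX (k + d - i) p d) (LC_bin a))).
  exact: (ZP_mul _ _ (ZP_ind p i k.+1) (ZP_mul _ _ (ZP_binX (k + d - i) p d) (ZP_bin a))).
have H : (v i 0%N)%:R - M <= \sum_(m < k.+1) (-1) ^+ m * (v i m)%:R.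
  apply: alt_bound => // m hm; rewrite /v.
  case h: (p * m + i < k.+1)%N; last by rewrite mul0n; exact: hM0.
  rewrite mul1n; apply: le_trans (hM _ h); rewrite hT /w.
  by rewrite [(p * m)%N]mulnC divnMDl // divn_small // addn0 [(m * p + i)%N]addnC subnDA.
rewrite lerNl; apply: le_trans H.
by rewrite lerDr ler0n.
Qed.
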